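(* For every integer $n\ge1$, $$B_n(t)=CB_n(t)+\frac{1}{n}(1-t)\,CB_n'(t),$$ where $CB_n'(t)$ denotes the derivative of the polynomial $CB_n(t)$ with respect to $t$.
   Context: For $\pi=[\pi_1,\ldots,\pi_n]\in S_n$ (one-line notation), a pair $(\pi_i,\pi_{i+1})$ with $1\le i\le n-1$ is a (regular) bond if $\pi_i-\pi_{i+1}=\pm1$. The pair $(\pi_n,\pi_1)$ is an edge bond if $\pi_n-\pi_1=\pm1$. A cyclic bond is a regular bond or an edge bond. Let $bnd(\pi)$ be the number of regular bonds and $cbnd(\pi)$ the number of cyclic bonds of $\pi$. For $n\ge1$ let $B_n(t)=\sum_{\pi\in S_n}t^{bnd(\pi)}$ and $CB_n(t)=\sum_{\pi\in S_n}t^{cbnd(\pi)}$. In particular each permutation of $S_2$ has $2$ cyclic bonds (so $CB_2(t)=2t^2$), and $B_1(t)=CB_1(t)=1$. *)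

(* Defs.v *)
From mathcomp Require Import all_boot all_order all_algebra all_fingroup.
Set Implicit Arguments. Unset Strict Implicit. Unset Printing Implicit Defensive.
Import GRing.Theory.

(* Permutations of S_n are elements of 'S_n = {perm 'I_n}; the one-line
   notation is [s 0; s 1; ...; s (n-1)] (values 0..n-1 instead of 1..n,
   which does not affect differences). *)

Definition adjb (a b : nat) : bool := (a == b.+1) || (b == a.+1).

Definition oneline (n : nat) (s : 'S_n) : seq nat := [seq val (s i) | i <- enum 'I_n].

Definition bnd (n : nat) (s : 'S_n) : nat :=
  \sum_(0 <= i < n.-1) adjb (nth 0 (oneline s) i) (nth 0 (oneline s) i.+1).

Definition ebnd (n : nat) (s : 'S_n) : nat :=
  if (0 < n)%N then nat_of_bool (adjb (nth 0 (oneline s) n.-1) (nth 0 (oneline s) 0)) else 0%N.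

Definition cbnd (n : nat) (s : 'S_n) : nat := bnd s + ebnd s.

Definition Bpoly (n : nat) : {poly rat} := \sum_(s : 'S_n) 'X^(bnd s).
Definition CBpoly (n : nat) : {poly rat} := \sum_(s : 'S_n) 'X^(cbnd s).

(* Main.v *)
Require Import Defs.
From mathcomp Require Import all_boot all_order all_algebra all_fingroup.
Import GRing.Theory.
Section Aux.
Variable m : nat.
Local Notation n := m.+1.

Definition fv (t : 'S_n) (k : nat) : nat := val (t (inord (k %% n))).
Definition ev (t : 'S_n) (k : nat) : nat := adjb (fv t k) (fv t k.+1).

Lemma nth_oneline (t : 'S_n) i : (i < n)%N -> nth 0%N (oneline t) i = fv t i.
Proof.
move=> hi; rewrite /oneline (nth_map ord0) ?size_enum_ord // /fv modn_small //.
congr (val (t _)); apply: val_inj; rewrite /= inordK // nth_enum_ord //.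
Qed.

Lemma ev_periodic t k : ev t (k + n) = ev t k.
Proof. by rewrite /ev /fv -addSn !modnDr. Qed.

Lemma sum_shift (g : nat -> nat) j :
  (forall k, g (k + n) = g k) ->
  (\sum_(0 <= k < n) g (k + j) = \sum_(0 <= k < n) g k)%N.
Proof.
move=> hg; elim: j => [|j IH]; first by apply: eq_bigr => k _; rewrite addn0.
rewrite -IH big_nat_recr //= [in RHS]big_nat_recl //= add0n addnC.
have -> : m + j.+1 = j + n by rewrite addnS -addSn addnC.
rewrite hg; congr (_ + _); apply: eq_bigr => k _; by rewrite addSnnS.
Qed.

Lemma bnd_sum t : bnd t = (\sum_(0 <= k < m) ev t k)%N.
Proof.
rewrite /bnd /=; apply: eq_big_nat => k /andP [_ hk].
by rewrite /ev !nth_oneline // ltnS ltnW.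
Qed.

Lemma cbnd_sum t : cbnd t = (\sum_(0 <= k < n) ev t k)%N.
Proof.
rewrite /cbnd bnd_sum big_nat_recr //=; congr (_ + _)%N.
rewrite /ebnd /= /ev !nth_oneline // /fv.
by rewrite modnn.
Qed.

Definition rotf (j : nat) (i : 'I_n) : 'I_n := inord ((i + j) %% n).

Lemma rotf_inj j : injective (rotf j).
Proof.
move=> a b /(congr1 val); rewrite /= !inordK ?ltn_pmod // => /eqP.
rewrite eqn_modDr !modn_small // => /eqP h; exact: val_inj.
Qed.

Definition rotp j : 'S_n := perm (@rotf_inj j).

Lemma fv_rot t j k : fv (rotp j * t) k = fv t (k + j).
Proof.
rewrite /fv permM permE /rotf; congr (val (t _)); apply: val_inj.
by rewrite /= !inordK ?ltn_pmod // modnDml.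
Qed.

Lemma bnd_rot t j : (bnd (rotp j * t) + ev t (m + j))%N = cbnd t.
Proof.
rewrite bnd_sum cbnd_sum -(sum_shift _ j (ev_periodic t)) big_nat_recr //=.
congr (_ + _)%N; apply: eq_big_nat => k _.
by rewrite /ev !fv_rot addSn.
Qed.

Lemma sum_ev t : (\sum_(j < n) ev t (m + j))%N = cbnd t.
Proof.
rewrite cbnd_sum -(sum_shift _ m (ev_periodic t)) big_mkord.
by apply: eq_bigr => j _; rewrite addnC.
Qed.

End Aux.

Local Open Scope ring_scope.

Lemma per_t m (t : 'S_m.+1) :
  \sum_(j < m.+1) ('X^(bnd (rotp m j * t)) : {poly rat}) =
  'X^(cbnd t) *+ m.+1 + (1 - 'X) * ('X^((cbnd t).-1) *+ cbnd t).
Proof.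
set c := cbnd t.
have step : forall j : 'I_m.+1, ('X^(bnd (rotp m j * t)) : {poly rat}) =
   'X^c + ('X^(c.-1) - 'X^c) *+ ev m t (m + j).
  move=> j; have := bnd_rot m t j; rewrite -/c => <-.
  rewrite /ev; case: adjb => /=; last by rewrite addn0 mulr0n addr0.
  by rewrite addn1 /= mulr1n addrC subrK.
rewrite (eq_bigr _ (fun j _ => step j)) big_split /= sumr_const card_ord.
rewrite sumrMnr (sum_ev m t) -/c; congr (_ + _).
clear step; case: c => [|c]; first by rewrite !mulr0n mulr0.
by rewrite mulrBl mul1r /= mulrnAr -exprS mulrnBl.
Qed.

Theorem theorem2p2 (n : nat) : (1 <= n)%N ->
  Bpoly n = CBpoly n + (n%:R)^-1 *: ((1 - 'X) * (CBpoly n)^`()).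
Proof.
case: n => // m _.
have key : (Bpoly m.+1) *+ m.+1 = CBpoly m.+1 *+ m.+1 + (1 - 'X) * (CBpoly m.+1)^`().
  rewrite -(card_ord m.+1) -sumr_const card_ord.
  have -> : \sum_(j < m.+1) Bpoly m.+1 =
     \sum_(j < m.+1) \sum_(t : 'S_m.+1) ('X^(bnd (rotp m j * t)) : {poly rat}).
    apply: eq_bigr => j _; rewrite /Bpoly (reindex_inj (mulgI (rotp m j))) //.
  rewrite exchange_big /= (eq_bigr _ (fun t _ => per_t _ t)) big_split /=.
  rewrite sumrMnl /CBpoly raddf_sum mulr_sumr; congr (_ + _).
  by apply: eq_bigr => t _; congr (_ * _); exact/esym/derivXn.
have hn : (m.+1%:R : rat) != 0 by rewrite Num.Theory.pnatr_eq0.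
have -> : Bpoly m.+1 = (m.+1%:R)^-1 *: (Bpoly m.+1 *+ m.+1).
  by rewrite -scaler_nat scalerA mulVf // scale1r.
by rewrite key scalerDr -scaler_nat scalerA mulVf // scale1r.
Qed.
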